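(* Let $A,B$ be tridendriform algebras over a field $\mathbb{K}$, with augmentations $\overline{A}=\mathbb{K}1\oplus A$ and $\overline{B}=\mathbb{K}1\oplus B$. Let $$A\overline{\otimes}B:=(A\otimes B)\oplus(\mathbb{K}1\otimes B)\oplus(A\otimes\mathbb{K}1)\subseteq\overline{A}\otimes\overline{B}.$$ For $\ltimes\in\{\prec,\cdot,\succ\}$ define bilinear products on $A\overline{\otimes}B$ on elements $a\otimes b$, $c\otimes d$ (with $a,c\in\overline A$, $b,d\in\overline B$, each of $a\otimes b$, $c\otimes d$ lying in one of the three summands) by: - if $b=d=1$ (so that $a,c\in A$): $(a\otimes 1)\ltimes(c\otimes 1)=(a\ltimes c)\otimes 1$; - otherwise: $(a\otimes b)\ltimes(c\otimes d)=(a*c)\otimes(b\ltimes d)$, computed with the augmented conventions in $\overline{A}$ and $\overline{B}$. Then $(A\overline{\otimes}B,\prec,\cdot,\succ)$ is a tridendriform algebra.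
   Context: A tridendriform algebra over $\mathbb{K}$ is a vector space $A$ with three bilinear products $\prec,\cdot,\succ$ such that, writing $a*b=a\prec b+a\cdot b+a\succ b$, for all $a,b,c\in A$: $(a\prec b)\prec c=a\prec(b*c)$, $(a\succ b)\prec c=a\succ(b\prec c)$, $(a*b)\succ c=a\succ(b\succ c)$, $(a\succ b)\cdot c=a\succ(b\cdot c)$, $(a\prec b)\cdot c=a\cdot(b\succ c)$, $(a\cdot b)\prec c=a\cdot(b\prec c)$, $(a\cdot b)\cdot c=a\cdot(b\cdot c)$. The augmentation of a tridendriform algebra $A$ is $\overline{A}=\mathbb{K}1\oplus A$, where $1$ is a formally adjoined unit for $*$ ($1*x=x*1=x$ for all $x\in\overline A$), and for all $a\in A$: $1\prec a=0$, $a\prec 1=a$, $1\succ a=a$, $a\succ 1=0$, $1\cdot a=a\cdot 1=0$. The products $1\prec 1$, $1\cdot 1$, $1\succ 1$ are not defined. *)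

(* Defs.v *)
From HB Require Import structures.
From mathcomp Require Import all_boot all_order all_algebra.
Set Implicit Arguments. Unset Strict Implicit. Unset Printing Implicit Defensive.
Import GRing.Theory.
Local Open Scope ring_scope.

Definition bilinear_map (K : fieldType) (U V W : lmodType K) (f : U -> V -> W) : Prop :=
  (forall u (k : K) v1 v2, f u (k *: v1 + v2) = k *: f u v1 + f u v2) /\
  (forall v (k : K) u1 u2, f (k *: u1 + u2) v = k *: f u1 v + f u2 v).

Definition tri_star (K : fieldType) (A : lmodType K) (prec dot succ : A -> A -> A)
  (a b : A) : A := prec a b + dot a b + succ a b.

Definition tridendriform (K : fieldType) (A : lmodType K)
  (prec dot succ : A -> A -> A) : Prop :=
  [/\ bilinear_map prec, bilinear_map dot & bilinear_map succ] /\
  let star := tri_star prec dot succ in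
  forall a b c : A,
  prec (prec a b) c = prec a (star b c) /\
  prec (succ a b) c = succ a (prec b c) /\
  succ (star a b) c = succ a (succ b c) /\
  dot (succ a b) c = succ a (dot b c) /\
  dot (prec a b) c = dot a (succ b c) /\
  prec (dot a b) c = dot a (prec b c) /\
  dot (dot a b) c = dot a (dot b c).

Definition is_tensor_product (K : fieldType) (A B T : lmodType K)
  (tens : A -> B -> T) : Prop :=
  bilinear_map tens /\
  forall (W : lmodType K) (f : A -> B -> W), bilinear_map f ->
    exists! g : T -> W,
      (forall (k : K) x y, g (k *: x + y) = k *: g x + g y) /\
      (forall a b, g (tens a b) = f a b).

(* ---------- augmentation  Abar = K1 (+) A, elements are pairs (lambda, a)
   standing for lambda 1 + a ---------- *)
Definition aug (K : fieldType) (A : lmodType K) := (K * A)%type.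

(* a * c in Abar: 1 is a unit for * (1*1 = 1). *)
Definition aug_star (K : fieldType) (A : lmodType K) (prec dot succ : A -> A -> A)
  (x y : aug A) : aug A :=
  (x.1 * y.1, x.1 *: y.2 + y.1 *: x.2 + tri_star prec dot succ x.2 y.2).

(* Bilinear extensions of the augmented conventions
   1 < a = 0, a < 1 = a, 1 > a = a, a > 1 = 0, 1 . a = a . 1 = 0.
   The undefined products 1 < 1, 1 . 1, 1 > 1 are given the junk value 0;
   they are never used below. *)
Definition aug_prec (K : fieldType) (A : lmodType K) (prec : A -> A -> A)
  (x y : aug A) : aug A := (0, prec x.2 y.2 + y.1 *: x.2).
Definition aug_dot (K : fieldType) (A : lmodType K) (dot : A -> A -> A)
  (x y : aug A) : aug A := (0, dot x.2 y.2).
Definition aug_succ (K : fieldType) (A : lmodType K) (succ : A -> A -> A)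
  (x y : aug A) : aug A := (0, succ x.2 y.2 + x.1 *: y.2).

(* ---------- A (x)bar B = (A (x) B) (+) (K1 (x) B) (+) (A (x) K1),
   modelled as T * B * A, with K1 (x) B = B and A (x) K1 = A. ---------- *)
Definition tbar (K : fieldType) (A B T : lmodType K) := (T * B * A)%type.

(* spanning elements a (x) b of the three summands *)
Inductive tgen (A B : Type) :=
  | GenAB of A & B
  | Gen1B of B
  | GenA1 of A.
Arguments GenAB {A B}. Arguments Gen1B {A B}. Arguments GenA1 {A B}.

Definition gen_val (K : fieldType) (A B T : lmodType K) (tens : A -> B -> T)
  (g : tgen A B) : tbar A B T :=
  match g with
  | GenAB a b => (tens a b, 0, 0)
  | Gen1B b => (0, b, 0)
  | GenA1 a => (0, 0, a)
  end.

Definition gen_left (K : fieldType) (A B : lmodType K) (g : tgen A B) : aug A :=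
  match g with GenAB a _ => (0, a) | Gen1B _ => (1, 0) | GenA1 a => (0, a) end.
Definition gen_right (K : fieldType) (A B : lmodType K) (g : tgen A B) : aug B :=
  match g with GenAB _ b => (0, b) | Gen1B b => (0, b) | GenA1 _ => (1, 0) end.

(* x (x) y in Abar (x) Bbar, projected onto A (x)bar B (drops the 1 (x) 1
   component, which is x.1 * y.1; it is zero in every use below). *)
Definition emb (K : fieldType) (A B T : lmodType K) (tens : A -> B -> T)
  (x : aug A) (y : aug B) : tbar A B T :=
  (tens x.2 y.2, x.1 *: y.2, y.1 *: x.2).

(* The defining formula of the product "ltimes" on A (x)bar B, given
   opA = ltimes on A, augopB = ltimes on Bbar (augmented conventions),
   starA = the augmented * on Abar. *)
Definition tbar_op_spec (K : fieldType) (A B T : lmodType K) (tens : A -> B -> T)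
  (opA : A -> A -> A) (starA : aug A -> aug A -> aug A)
  (augopB : aug B -> aug B -> aug B)
  (opX : tbar A B T -> tbar A B T -> tbar A B T) : Prop :=
  forall g h : tgen A B,
    opX (gen_val tens g) (gen_val tens h) =
    match g, h with
    | GenA1 a, GenA1 c => (0, 0, opA a c)
    | _, _ => emb tens (starA (gen_left g) (gen_left h))
                       (augopB (gen_right g) (gen_right h))
    end.

(* Main.v *)
Require Import Defs.
From HB Require Import structures.
From mathcomp Require Import all_boot all_order all_algebra.
From mathcomp Require Import ring.
From Stdlib Require Import ClassicalEpsilon.
Import GRing.Theory.
Set Implicit Arguments. Unset Strict Implicit.
Local Open Scope ring_scope.

Definition lin {K : fieldType} {V W : lmodType K} (f : V -> W) : Prop :=
  forall k x y, f (k *: x + y) = k *: f x + f y.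

Section LinBasics.
Variable K : fieldType.
Implicit Types V W U : lmodType K.

Lemma lin0 V W (f : V -> W) : lin f -> f 0 = 0.
Proof. move=> H; apply/(addrI (f 0)); rewrite addr0 -{1}(scale1r (f 0)) -H.
by rewrite scale1r addr0. Qed.
Lemma linD V W (f : V -> W) : lin f -> forall x y, f (x + y) = f x + f y.
Proof. by move=> H x y; have := H 1 x y; rewrite !scale1r. Qed.
Lemma linZ V W (f : V -> W) : lin f -> forall k x, f (k *: x) = k *: f x.
Proof. by move=> H k x; have := H k x 0; rewrite !addr0 (lin0 H) addr0. Qed.

Lemma bil_linr U V W (f : U -> V -> W) : bilinear_map f -> forall u, lin (f u).
Proof. by case=> H _ u k x y; rewrite H. Qed.
Lemma bil_linl U V W (f : U -> V -> W) : bilinear_map f -> forall v, lin (fun u => f u v).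
Proof. by case=> _ H v k x y; rewrite H. Qed.

Lemma lin_id V : lin (fun x : V => x). Proof. by []. Qed.
Lemma lin_zero V W : lin (fun _ : V => (0 : W)). Proof. by move=> k x y; rewrite scaler0 addr0. Qed.
Lemma lin_comp U V W (f : V -> W) (g : U -> V) : lin f -> lin g -> lin (fun x => f (g x)).
Proof. by move=> Hf Hg k x y; rewrite Hg Hf. Qed.
Lemma lin_comb V W (f g : V -> W) (c : K) : lin f -> lin g -> lin (fun x => c *: f x + g x).
Proof.
move=> Hf Hg k x y; rewrite Hf Hg !scalerDr !scalerA mulrC.
by rewrite -!addrA; congr (_ + _); rewrite addrCA.
Qed.
End LinBasics.

Lemma pull_step (V : zmodType) (b a r r' : V) : r = a + r' -> b + r = a + (b + r').
Proof. by move=> ->; rewrite addrCA. Qed.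
Lemma pull_here (V : zmodType) (a b r : V) : b = a -> b + r = a + r.
Proof. by move=> ->. Qed.
Lemma pull_last (V : zmodType) (a b : V) : b = a -> b = a + 0.
Proof. by move=> ->; rewrite addr0. Qed.

Ltac atom_eq a b :=
  first [ constr_eq a b; exact (erefl a)
        | lazymatch constr:((a,b)) with
          | (?s *: ?v, ?s' *: ?v) => apply: (congr1 (fun z => z *: v)); ring
          end ].

Ltac pullE a y :=
  match y with
  | (?b + ?r)%R => let e := constr:(ltac:(atom_eq a b) : b = a) in constr:(pull_here r e)
  | (?b + ?r)%R => let p := pullE a r in constr:(pull_step b p)
  | ?b => let e := constr:(ltac:(atom_eq a b) : b = a) in constr:(pull_last e)
  end.

Ltac ac_step :=
  lazymatch goal with
  | |- (?a + ?x)%R = ?y => let p := pullE a y in apply: (eq_trans _ (esym p));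
        apply: (congr1 (fun z => a + z)); rewrite ?addr0
  end.
Ltac ac_loop :=
  lazymatch goal with
  | |- (?a + ?x)%R = ?y => let p := pullE a y in apply: (eq_trans _ (esym p));
        apply: (congr1 (fun z => a + z)); rewrite ?addr0; ac_loop
  | |- ?a = ?a => reflexivity
  | |- ?a = ?y => let p := pullE a y in apply: (eq_trans _ (esym p)); rewrite ?addr0; reflexivity
  end.
Ltac ac := rewrite -?addrA ?addr0 ?add0r; ac_loop.

Goal forall (K : fieldType) (V : lmodType K) (a b c d : V) (s t : K),
  a + (s * t) *: b + (c + d) = d + ((t * s) *: b + c) + a.
Proof. move=> *. ac. Qed.

Section Tensor.
Variables (K : fieldType) (A B T : lmodType K) (tens : A -> B -> T).
Hypothesis Ht : is_tensor_product tens.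

Lemma tens_bil : bilinear_map tens. Proof. exact: Ht.1. Qed.

Lemma T_uniq (W : lmodType K) (g1 g2 : T -> W) : lin g1 -> lin g2 ->
  (forall a b, g1 (tens a b) = g2 (tens a b)) -> forall t, g1 t = g2 t.
Proof.
move=> H1 H2 E.
have Hf : bilinear_map (fun a b => g1 (tens a b)).
  split=> u k x y.
  - by rewrite (bil_linr tens_bil) H1.
  - by rewrite (bil_linl tens_bil) H1.
have [g [_ Hu]] := Ht.2 W _ Hf.
have e1 := Hu g1 (conj H1 (fun _ _ => erefl)).
have e2 := Hu g2 (conj H2 (fun a b => esym (E a b))).
by move=> t; rewrite -e1 -e2.
Qed.

Definition liftT (W : lmodType K) (f : A -> B -> W) : T -> W :=
  epsilon (inhabits (fun _ : T => 0 : W))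
    (fun g => lin g /\ forall a b, g (tens a b) = f a b).

Lemma liftT_spec (W : lmodType K) (f : A -> B -> W) : bilinear_map f ->
  lin (liftT f) /\ forall a b, liftT f (tens a b) = f a b.
Proof.
move=> Hf; apply: (epsilon_spec (inhabits (fun _ : T => 0 : W))
    (fun g => lin g /\ forall a b, g (tens a b) = f a b)).
have [g [Hg _]] := Ht.2 W f Hf; by exists g.
Qed.

Lemma liftT_lin (W : lmodType K) (f : A -> B -> W) : bilinear_map f -> lin (liftT f).
Proof. by case/liftT_spec. Qed.
Lemma liftT_tens (W : lmodType K) (f : A -> B -> W) a b : bilinear_map f ->
  liftT f (tens a b) = f a b.
Proof. by case/liftT_spec. Qed.
Lemma liftT0 (W : lmodType K) (f : A -> B -> W) : bilinear_map f -> liftT f 0 = 0.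
Proof. by move/liftT_lin/lin0. Qed.

Lemma liftT_param (V W : lmodType K) (f : V -> A -> B -> W) :
  (forall p, bilinear_map (f p)) -> (forall a b, lin (fun p => f p a b)) ->
  forall t, lin (fun p => liftT (f p) t).
Proof.
move=> Hb Hl t k p q.
apply: (T_uniq (g2 := fun t => k *: liftT (f p) t + liftT (f q) t)) => //.
- exact: liftT_lin.
- by apply: lin_comb; apply: liftT_lin.
- by move=> a b; rewrite !liftT_tens // Hl.
Qed.

Section Lift2.
Variables (W : lmodType K) (Psi : A -> B -> A -> B -> W).
Hypothesis H1 : forall c d, bilinear_map (fun a b => Psi a b c d).
Hypothesis H2 : forall a b, bilinear_map (Psi a b).

Definition liftTT (t t' : T) : W :=
  liftT (fun c d => liftT (fun a b => Psi a b c d) t) t'.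

Lemma liftTT_inner t : bilinear_map (fun c d => liftT (fun a b => Psi a b c d) t).
Proof.
split=> u k x y.
- apply: (liftT_param (f := fun p a b => Psi a b u p)) => //.
  by move=> a b; apply: (bil_linr (H2 a b)).
- apply: (liftT_param (f := fun p a b => Psi a b p u)) => //.
  by move=> a b; apply: (bil_linl (H2 a b)).
Qed.

Lemma liftTT_linr t : lin (liftTT t).
Proof. exact: liftT_lin (liftTT_inner t). Qed.
Lemma liftTT_linl t' : lin (fun t => liftTT t t').
Proof.
apply: (liftT_param (f := fun p c d => liftT (fun a b => Psi a b c d) p)).
- exact: liftTT_inner.
- by move=> c d; apply: liftT_lin.
Qed.
Lemma liftTT_tens a b c d : liftTT (tens a b) (tens c d) = Psi a b c d.
Proof. by rewrite /liftTT liftT_tens ?liftT_tens //; apply: liftTT_inner. Qed.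
End Lift2.
End Tensor.

Section Gen.
Variables (K : fieldType) (A B T : lmodType K) (tens : A -> B -> T).
Hypothesis Ht : is_tensor_product tens.
Variables (precA dotA succA : A -> A -> A).
Hypotheses (HpA : bilinear_map precA) (HdA : bilinear_map dotA) (HsA : bilinear_map succA).

Local Notation tb := (tbar A B T).
Local Notation starT := (tri_star precA dotA succA).
Local Notation starA := (aug_star precA dotA succA).

Lemma tensDl a1 a2 b : tens (a1 + a2) b = tens a1 b + tens a2 b.
Proof. exact: (linD (bil_linl (tens_bil Ht) b)). Qed.
Lemma tensDr a b1 b2 : tens a (b1 + b2) = tens a b1 + tens a b2.
Proof. exact: (linD (bil_linr (tens_bil Ht) a)). Qed.
Lemma tensZl k a b : tens (k *: a) b = k *: tens a b.
Proof. exact: (linZ (bil_linl (tens_bil Ht) b)). Qed.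
Lemma tensZr k a b : tens a (k *: b) = k *: tens a b.
Proof. exact: (linZ (bil_linr (tens_bil Ht) a)). Qed.
Lemma tens0l b : tens 0 b = 0.
Proof. exact: (lin0 (bil_linl (tens_bil Ht) b)). Qed.
Lemma tens0r a : tens a 0 = 0.
Proof. exact: (lin0 (bil_linr (tens_bil Ht) a)). Qed.

Lemma starT_bil : bilinear_map starT.
Proof.
split=> u k x y; rewrite /tri_star.
- rewrite (bil_linr HpA) (bil_linr HdA) (bil_linr HsA) !scalerDr; ac.
- rewrite (bil_linl HpA) (bil_linl HdA) (bil_linl HsA) !scalerDr; ac.
Qed.
Lemma starT0l a : starT 0 a = 0. Proof. exact: (lin0 (bil_linl starT_bil a)). Qed.
Lemma starT0r a : starT a 0 = 0. Proof. exact: (lin0 (bil_linr starT_bil a)). Qed.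

Lemma tbar_eq (x y : tb) : x.1.1 = y.1.1 -> x.1.2 = y.1.2 -> x.2 = y.2 -> x = y.
Proof. by case: x => [[? ?] ?]; case: y => [[? ?] ?] /= -> -> ->. Qed.
Lemma tbD11 (x y : tb) : (x + y).1.1 = x.1.1 + y.1.1. Proof. by []. Qed.
Lemma tbD12 (x y : tb) : (x + y).1.2 = x.1.2 + y.1.2. Proof. by []. Qed.
Lemma tbD2 (x y : tb) : (x + y).2 = x.2 + y.2. Proof. by []. Qed.
Lemma tbZ11 k (x : tb) : (k *: x).1.1 = k *: x.1.1. Proof. by []. Qed.
Lemma tbZ12 k (x : tb) : (k *: x).1.2 = k *: x.1.2. Proof. by []. Qed.
Lemma tbZ2 k (x : tb) : (k *: x).2 = k *: x.2. Proof. by []. Qed.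
Lemma tb0 : (0 : tb) = (0, 0, 0). Proof. by []. Qed.

Definition tbE := (tbD11, tbD12, tbD2, tbZ11, tbZ12, tbZ2).

Lemma gen_emb (g : tgen A B) : gen_val tens g = emb tens (gen_left g) (gen_right g).
Proof.
case: g => [a b|b|a]; apply: tbar_eq => /=;
  by rewrite ?scale0r ?scale1r ?scaler0 ?tens0l ?tens0r.
Qed.

Lemma emb_decomp (x : aug A) (y : aug B) : emb tens x y =
  x.1 *: gen_val tens (Gen1B y.2) + y.1 *: gen_val tens (GenA1 x.2)
  + gen_val tens (GenAB x.2 y.2).
Proof.
apply: tbar_eq; rewrite !tbE /= ?scaler0 ?add0r ?addr0 //.
Qed.

Lemma embDr (x : aug A) (y1 y2 : aug B) :
  emb tens x (y1 + y2) = emb tens x y1 + emb tens x y2.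
Proof.
apply: tbar_eq; rewrite !tbE /= ?tensDr ?scalerDr ?scalerDl //.
Qed.

Section U.
Variables (opX : tb -> tb -> tb) (opA : A -> A -> A) (opB : B -> B -> B) (r l : B -> B)
  (augop : aug B -> aug B -> aug B).
Hypotheses (HX : bilinear_map opX) (HoB : bilinear_map opB) (Hr : lin r) (Hl : lin l).
Hypothesis Haug : forall y y', augop y y' = (0, opB y.2 y'.2 + y'.1 *: r y.2 + y.1 *: l y'.2).
Hypothesis Hspec : tbar_op_spec tens opA starA augop opX.

Lemma opXDl x y z : opX (x + y) z = opX x z + opX y z.
Proof. exact: (linD (bil_linl HX z)). Qed.
Lemma opXDr x y z : opX x (y + z) = opX x y + opX x z.
Proof. exact: (linD (bil_linr HX x)). Qed.
Lemma opXZl k x z : opX (k *: x) z = k *: opX x z.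
Proof. exact: (linZ (bil_linl HX z)). Qed.
Lemma opXZr k x z : opX x (k *: z) = k *: opX x z.
Proof. exact: (linZ (bil_linr HX x)). Qed.
Lemma opB0l b : opB 0 b = 0. Proof. exact: (lin0 (bil_linl HoB b)). Qed.
Lemma opB0r b : opB b 0 = 0. Proof. exact: (lin0 (bil_linr HoB b)). Qed.
Lemma r0 : r 0 = 0. Proof. exact: lin0. Qed.
Lemma l0 : l 0 = 0. Proof. exact: lin0. Qed.

Lemma augop1 y y' : (augop y y').1 = 0. Proof. by rewrite Haug. Qed.

Lemma lemU (x x' : aug A) (y y' : aug B) :
  x.1 * y.1 = 0 -> x'.1 * y'.1 = 0 -> y.1 * y'.1 = 0 ->
  opX (emb tens x y) (emb tens x' y') = emb tens (starA x x') (augop y y').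
Proof.
move=> H1 H2 H3.
rewrite [in LHS](emb_decomp x y) [in LHS](emb_decomp x' y').
rewrite !opXDl !opXDr !opXZl !opXZr !Hspec /= !Haug /=.
have H1' : y.1 * x.1 = 0 by rewrite mulrC.
have H2' : y'.1 * x'.1 = 0 by rewrite mulrC.
have H3' : y'.1 * y.1 = 0 by rewrite mulrC.
apply: tbar_eq; rewrite !tbE /=;
 rewrite ?(mul0r, mulr0, mul1r, mulr1, scale0r, scale1r, scaler0, add0r, addr0,
   starT0l, starT0r, opB0l, opB0r, r0, l0, tens0l, tens0r);
 rewrite ?(tensDl, tensDr, tensZl, tensZr, scalerDr, scalerA); rewrite -?mulrA ?(H1, H2, H3, H1', H2', H3');
 rewrite ?(mul0r, mulr0, scale0r, scaler0, add0r, addr0).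
- ac.
- by rewrite [x.1 * (x'.1 * y.1)]mulrCA H1 mulr0 scale0r addr0.
- done.
Qed.
End U.
End Gen.

Section Tri.
Variables (K : fieldType) (V : lmodType K) (p d s : V -> V -> V).
Hypothesis H : tridendriform p d s.

Lemma tri_bp : bilinear_map p. Proof. by case: H => [[]]. Qed.
Lemma tri_bd : bilinear_map d. Proof. by case: H => [[]]. Qed.
Lemma tri_bs : bilinear_map s. Proof. by case: H => [[]]. Qed.

Lemma pDl x y z : p (x + y) z = p x z + p y z. Proof. exact: (linD (bil_linl tri_bp z)). Qed.
Lemma pDr x y z : p x (y + z) = p x y + p x z. Proof. exact: (linD (bil_linr tri_bp x)). Qed.
Lemma pZl k x z : p (k *: x) z = k *: p x z. Proof. exact: (linZ (bil_linl tri_bp z)). Qed.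
Lemma pZr k x z : p x (k *: z) = k *: p x z. Proof. exact: (linZ (bil_linr tri_bp x)). Qed.
Lemma p0l x : p 0 x = 0. Proof. exact: (lin0 (bil_linl tri_bp x)). Qed.
Lemma p0r x : p x 0 = 0. Proof. exact: (lin0 (bil_linr tri_bp x)). Qed.
Lemma dDl x y z : d (x + y) z = d x z + d y z. Proof. exact: (linD (bil_linl tri_bd z)). Qed.
Lemma dDr x y z : d x (y + z) = d x y + d x z. Proof. exact: (linD (bil_linr tri_bd x)). Qed.
Lemma dZl k x z : d (k *: x) z = k *: d x z. Proof. exact: (linZ (bil_linl tri_bd z)). Qed.
Lemma dZr k x z : d x (k *: z) = k *: d x z. Proof. exact: (linZ (bil_linr tri_bd x)). Qed.
Lemma d0l x : d 0 x = 0. Proof. exact: (lin0 (bil_linl tri_bd x)). Qed.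
Lemma d0r x : d x 0 = 0. Proof. exact: (lin0 (bil_linr tri_bd x)). Qed.
Lemma sDl x y z : s (x + y) z = s x z + s y z. Proof. exact: (linD (bil_linl tri_bs z)). Qed.
Lemma sDr x y z : s x (y + z) = s x y + s x z. Proof. exact: (linD (bil_linr tri_bs x)). Qed.
Lemma sZl k x z : s (k *: x) z = k *: s x z. Proof. exact: (linZ (bil_linl tri_bs z)). Qed.
Lemma sZr k x z : s x (k *: z) = k *: s x z. Proof. exact: (linZ (bil_linr tri_bs x)). Qed.
Lemma s0l x : s 0 x = 0. Proof. exact: (lin0 (bil_linl tri_bs x)). Qed.
Lemma s0r x : s x 0 = 0. Proof. exact: (lin0 (bil_linr tri_bs x)). Qed.

Lemma ax1 a b c : p (p a b) c = p a (p b c + d b c + s b c).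
Proof. by case: H => _ /(_ a b c) []. Qed.
Lemma ax2 a b c : p (s a b) c = s a (p b c).
Proof. by case: H => _ /(_ a b c) [_ []]. Qed.
Lemma ax3 a b c : s (p a b + d a b + s a b) c = s a (s b c).
Proof. by case: H => _ /(_ a b c) [_ [_ []]]. Qed.
Lemma ax4 a b c : d (s a b) c = s a (d b c).
Proof. by case: H => _ /(_ a b c) [_ [_ [_ []]]]. Qed.
Lemma ax5 a b c : d (p a b) c = d a (s b c).
Proof. by case: H => _ /(_ a b c) [_ [_ [_ [_ []]]]]. Qed.
Lemma ax6 a b c : p (d a b) c = d a (p b c).
Proof. by case: H => _ /(_ a b c) [_ [_ [_ [_ [_ []]]]]]. Qed.
Lemma ax7 a b c : d (d a b) c = d a (d b c).
Proof. by case: H => _ /(_ a b c) [_ [_ [_ [_ [_ []]]]]]. Qed.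

Definition linE := (pDl, pDr, pZl, pZr, p0l, p0r, dDl, dDr, dZl, dZr, d0l, d0r,
  sDl, sDr, sZl, sZr, s0l, s0r, scalerDr, scalerA, scale0r, scaler0, scale1r,
  add0r, addr0, mul0r, mulr0, mul1r, mulr1).

Lemma star_assoc a b c : tri_star p d s (tri_star p d s a b) c = tri_star p d s a (tri_star p d s b c).
Proof.
rewrite /tri_star.
rewrite ax3 ?linE ax1 ax6 ax2 ax5 ax7 ax4 ?linE.
ac.
Qed.

Definition tstar := tri_star p d s.
Lemma tstar_bil : bilinear_map tstar.
Proof.
split=> u k x y; rewrite /tstar /tri_star ?linE; ac.
Qed.

Lemma aug_eq (x y : aug V) : x.1 = y.1 -> x.2 = y.2 -> x = y.
Proof. by case: x; case: y => /= ? ? ? ? -> ->. Qed.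
Lemma augD1 (x y : aug V) : (x + y).1 = x.1 + y.1. Proof. by []. Qed.
Lemma augD2 (x y : aug V) : (x + y).2 = x.2 + y.2. Proof. by []. Qed.

Local Notation ap := (aug_prec p).
Local Notation ad := (aug_dot d).
Local Notation as_ := (aug_succ s).
Local Notation ast x y := (ap x y + ad x y + as_ x y).

Section Gen3.
Variables y1 y2 y3 : aug V.
Hypotheses (H12 : y1.1 * y2.1 = 0) (H23 : y2.1 * y3.1 = 0).
Let H21 : y2.1 * y1.1 = 0. Proof. by rewrite mulrC. Qed.
Let H32 : y3.1 * y2.1 = 0. Proof. by rewrite mulrC. Qed.

Ltac bsolve := apply: aug_eq; [by rewrite /= ?augD1 /= ?addr0 |];
  rewrite /= ?augD1 ?augD2 /= ?linE; rewrite ?(H12, H23, H21, H32) ?linE.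

Lemma bid1 : ap (ap y1 y2) y3 = ap y1 (ast y2 y3).
Proof. bsolve. rewrite ax1 ?linE. ac. Qed.
Lemma bid2 : ap (as_ y1 y2) y3 = as_ y1 (ap y2 y3).
Proof. bsolve. rewrite ax2 ?linE. ac. Qed.
Lemma bid3 : as_ (ast y1 y2) y3 = as_ y1 (as_ y2 y3).
Proof. bsolve. rewrite -ax3 ?linE. ac. Qed.
Lemma bid4 : ad (as_ y1 y2) y3 = as_ y1 (ad y2 y3).
Proof. bsolve. rewrite ax4 ?linE. ac. Qed.
Lemma bid5 : ad (ap y1 y2) y3 = ad y1 (as_ y2 y3).
Proof. bsolve. rewrite ax5 ?linE. ac. Qed.
Lemma bid6 : ap (ad y1 y2) y3 = ad y1 (ap y2 y3).
Proof. bsolve. rewrite ax6 ?linE. ac. Qed.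
Lemma bid7 : ad (ad y1 y2) y3 = ad y1 (ad y2 y3).
Proof. bsolve. rewrite ax7 ?linE. ac. Qed.
End Gen3.
End Tri.

Section Main.
Variables (K : fieldType) (A B T : lmodType K) (tens : A -> B -> T).
Hypothesis Ht : is_tensor_product tens.
Variables (precA dotA succA : A -> A -> A) (precB dotB succB : B -> B -> B).
Hypotheses (HA : tridendriform precA dotA succA) (HB : tridendriform precB dotB succB).
Local Notation tb := (tbar A B T).
Local Notation starA := (aug_star precA dotA succA).
Variables (precX dotX succX : tb -> tb -> tb).
Hypotheses (HpX : bilinear_map precX) (HdX : bilinear_map dotX) (HsX : bilinear_map succX).
Hypotheses (SpX : tbar_op_spec tens precA starA (aug_prec precB) precX)
  (SdX : tbar_op_spec tens dotA starA (aug_dot dotB) dotX)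
  (SsX : tbar_op_spec tens succA starA (aug_succ succB) succX).
Local Notation starX := (tri_star precX dotX succX).
Local Notation gv := (gen_val tens).

Let HpA := tri_bp HA. Let HdA := tri_bd HA. Let HsA := tri_bs HA.
Let HpB := tri_bp HB. Let HdB := tri_bd HB. Let HsB := tri_bs HB.

Lemma Up x x' y y' : x.1 * y.1 = 0 -> x'.1 * y'.1 = 0 -> y.1 * y'.1 = 0 ->
  precX (emb tens x y) (emb tens x' y') = emb tens (starA x x') (aug_prec precB y y').
Proof.
apply: (@lemU K A B T tens Ht precA dotA succA HpA HdA HsA precX precA precB id (fun _ => 0) (aug_prec precB)) => //;
  try exact: lin_id; try exact: lin_zero.
by move=> z z'; rewrite /aug_prec scaler0 addr0.
Qed.
Lemma Ud x x' y y' : x.1 * y.1 = 0 -> x'.1 * y'.1 = 0 -> y.1 * y'.1 = 0 ->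
  dotX (emb tens x y) (emb tens x' y') = emb tens (starA x x') (aug_dot dotB y y').
Proof.
apply: (@lemU K A B T tens Ht precA dotA succA HpA HdA HsA dotX dotA dotB (fun _ => 0) (fun _ => 0) (aug_dot dotB)) => //;
  try exact: lin_id; try exact: lin_zero.
by move=> z z'; rewrite /aug_dot !scaler0 !addr0.
Qed.
Lemma Us x x' y y' : x.1 * y.1 = 0 -> x'.1 * y'.1 = 0 -> y.1 * y'.1 = 0 ->
  succX (emb tens x y) (emb tens x' y') = emb tens (starA x x') (aug_succ succB y y').
Proof.
apply: (@lemU K A B T tens Ht precA dotA succA HpA HdA HsA succX succA succB (fun _ => 0) id (aug_succ succB)) => //;
  try exact: lin_id; try exact: lin_zero.
by move=> z z'; rewrite /aug_succ scaler0 addr0.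
Qed.

Let HstA := starT_bil HpA HdA HsA.
Lemma stDl x y z : tri_star precA dotA succA (x + y) z = tri_star precA dotA succA x z + tri_star precA dotA succA y z.
Proof. exact: (linD (bil_linl HstA z)). Qed.
Lemma stDr x y z : tri_star precA dotA succA x (y + z) = tri_star precA dotA succA x y + tri_star precA dotA succA x z.
Proof. exact: (linD (bil_linr HstA x)). Qed.
Lemma stZl k x z : tri_star precA dotA succA (k *: x) z = k *: tri_star precA dotA succA x z.
Proof. exact: (linZ (bil_linl HstA z)). Qed.
Lemma stZr k x z : tri_star precA dotA succA x (k *: z) = k *: tri_star precA dotA succA x z.
Proof. exact: (linZ (bil_linr HstA x)). Qed.
Lemma st0l x : tri_star precA dotA succA 0 x = 0. Proof. exact: (lin0 (bil_linl HstA x)). Qed.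
Lemma st0r x : tri_star precA dotA succA x 0 = 0. Proof. exact: (lin0 (bil_linr HstA x)). Qed.

Lemma augA x y z : starA (starA x y) z = starA x (starA y z).
Proof.
case: x => l1 a1; case: y => l2 a2; case: z => l3 a3.
apply: aug_eq => /=; first by rewrite mulrA.
move: (star_assoc HA a1 a2 a3) HstA; generalize (tri_star precA dotA succA) => st Hsa Hst.
rewrite !(linD (bil_linl Hst _), linD (bil_linr Hst _), linZ (bil_linl Hst _), linZ (bil_linr Hst _)).
rewrite !(scalerDr, scalerA) Hsa; ac.
Qed.

Lemma gen_cond (g : tgen A B) : (gen_left g).1 * (gen_right g).1 = 0.
Proof. by case: g => /= *; rewrite ?mul0r ?mulr0. Qed.

Ltac side := by rewrite /= ?addr0 ?mul0r ?mulr0 ?gen_cond.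

Section Generic.
Variables g h k : tgen A B.
Hypotheses (Hgh : (gen_right g).1 * (gen_right h).1 = 0)
  (Hhk : (gen_right h).1 * (gen_right k).1 = 0).

Ltac gsolve := rewrite !gen_emb /tri_star;
  rewrite ?(Up, Ud, Us); try side; rewrite -?embDr; rewrite ?(Up, Ud, Us); try side;
  rewrite (augA (gen_left g)); congr (emb _ _ _).

Lemma gid1 : precX (precX (gv g) (gv h)) (gv k) = precX (gv g) (starX (gv h) (gv k)).
Proof. gsolve; by apply: (bid1 HB). Qed.
Lemma gid2 : precX (succX (gv g) (gv h)) (gv k) = succX (gv g) (precX (gv h) (gv k)).
Proof. gsolve; by apply: (bid2 HB). Qed.
Lemma gid3 : succX (starX (gv g) (gv h)) (gv k) = succX (gv g) (succX (gv h) (gv k)).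
Proof. gsolve; by apply: (bid3 HB). Qed.
Lemma gid4 : dotX (succX (gv g) (gv h)) (gv k) = succX (gv g) (dotX (gv h) (gv k)).
Proof. gsolve; by apply: (bid4 HB). Qed.
Lemma gid5 : dotX (precX (gv g) (gv h)) (gv k) = dotX (gv g) (succX (gv h) (gv k)).
Proof. gsolve; by apply: (bid5 HB). Qed.
Lemma gid6 : precX (dotX (gv g) (gv h)) (gv k) = dotX (gv g) (precX (gv h) (gv k)).
Proof. gsolve; by apply: (bid6 HB). Qed.
Lemma gid7 : dotX (dotX (gv g) (gv h)) (gv k) = dotX (gv g) (dotX (gv h) (gv k)).
Proof. gsolve; by apply: (bid7 HB). Qed.
End Generic.

Lemma specAp a c : precX (gv (GenA1 a)) (gv (GenA1 c)) = gv (GenA1 (precA a c)).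
Proof. exact: (SpX (GenA1 a) (GenA1 c)). Qed.
Lemma specAd a c : dotX (gv (GenA1 a)) (gv (GenA1 c)) = gv (GenA1 (dotA a c)).
Proof. exact: (SdX (GenA1 a) (GenA1 c)). Qed.
Lemma specAs a c : succX (gv (GenA1 a)) (gv (GenA1 c)) = gv (GenA1 (succA a c)).
Proof. exact: (SsX (GenA1 a) (GenA1 c)). Qed.
Lemma starX_AA a c : starX (gv (GenA1 a)) (gv (GenA1 c)) = gv (GenA1 (tri_star precA dotA succA a c)).
Proof.
rewrite {1}/tri_star specAp specAd specAs.
by apply: tbar_eq => /=; rewrite ?addr0.
Qed.

Section AAA.
Variables a c e : A.
Ltac asolve := rewrite ?starX_AA ?(specAp, specAd, specAs); congr (gv (GenA1 _)).
Lemma aid1 : precX (precX (gv (GenA1 a)) (gv (GenA1 c))) (gv (GenA1 e)) =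
  precX (gv (GenA1 a)) (starX (gv (GenA1 c)) (gv (GenA1 e))).
Proof. asolve. exact: (ax1 HA). Qed.
Lemma aid2 : precX (succX (gv (GenA1 a)) (gv (GenA1 c))) (gv (GenA1 e)) =
  succX (gv (GenA1 a)) (precX (gv (GenA1 c)) (gv (GenA1 e))).
Proof. asolve. exact: (ax2 HA). Qed.
Lemma aid3 : succX (starX (gv (GenA1 a)) (gv (GenA1 c))) (gv (GenA1 e)) =
  succX (gv (GenA1 a)) (succX (gv (GenA1 c)) (gv (GenA1 e))).
Proof. asolve. exact: (ax3 HA). Qed.
Lemma aid4 : dotX (succX (gv (GenA1 a)) (gv (GenA1 c))) (gv (GenA1 e)) =
  succX (gv (GenA1 a)) (dotX (gv (GenA1 c)) (gv (GenA1 e))).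
Proof. asolve. exact: (ax4 HA). Qed.
Lemma aid5 : dotX (precX (gv (GenA1 a)) (gv (GenA1 c))) (gv (GenA1 e)) =
  dotX (gv (GenA1 a)) (succX (gv (GenA1 c)) (gv (GenA1 e))).
Proof. asolve. exact: (ax5 HA). Qed.
Lemma aid6 : precX (dotX (gv (GenA1 a)) (gv (GenA1 c))) (gv (GenA1 e)) =
  dotX (gv (GenA1 a)) (precX (gv (GenA1 c)) (gv (GenA1 e))).
Proof. asolve. exact: (ax6 HA). Qed.
Lemma aid7 : dotX (dotX (gv (GenA1 a)) (gv (GenA1 c))) (gv (GenA1 e)) =
  dotX (gv (GenA1 a)) (dotX (gv (GenA1 c)) (gv (GenA1 e))).
Proof. asolve. exact: (ax7 HA). Qed.
End AAA.

Lemma starXE x y : starX x y = precX x y + dotX x y + succX x y.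
Proof. by []. Qed.
Ltac fin := rewrite ?(mul0r, mulr0, mul1r, mulr1, scale0r, scale1r, scaler0, add0r, addr0,
   st0l, st0r, p0l HB, p0r HB, d0l HB, d0r HB, s0l HB, s0r HB, tens0l Ht, tens0r Ht);
   rewrite ?(star_assoc HA) //.
Section AAn.
Variables (a c : A) (k : tgen A B).
Hypothesis Hk : (gen_right k).1 = 0.
Ltac side' := by rewrite /= ?Hk ?addr0 ?mul0r ?mulr0 ?mul1r ?gen_cond.
Ltac ssolve := rewrite ?starX_AA ?(specAp, specAd, specAs) !gen_emb ?starXE;
  rewrite ?(Up, Ud, Us); try side'; rewrite -?embDr ?(Up, Ud, Us); try side';
  case: k Hk => [e f|f|e] /=; [move=> _ | move=> _ | by move/eqP; rewrite oner_eq0];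
  apply: tbar_eq => /=; fin.
Lemma bAAn1 : precX (precX (gv (GenA1 a)) (gv (GenA1 c))) (gv k) =
  precX (gv (GenA1 a)) (starX (gv (GenA1 c)) (gv k)).
Proof. ssolve. Qed.
Lemma bAAn2 : precX (succX (gv (GenA1 a)) (gv (GenA1 c))) (gv k) =
  succX (gv (GenA1 a)) (precX (gv (GenA1 c)) (gv k)).
Proof. ssolve. Qed.
Lemma bAAn3 : succX (starX (gv (GenA1 a)) (gv (GenA1 c))) (gv k) =
  succX (gv (GenA1 a)) (succX (gv (GenA1 c)) (gv k)).
Proof. ssolve. Qed.
Lemma bAAn4 : dotX (succX (gv (GenA1 a)) (gv (GenA1 c))) (gv k) =
  succX (gv (GenA1 a)) (dotX (gv (GenA1 c)) (gv k)).
Proof. ssolve. Qed.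
Lemma bAAn5 : dotX (precX (gv (GenA1 a)) (gv (GenA1 c))) (gv k) =
  dotX (gv (GenA1 a)) (succX (gv (GenA1 c)) (gv k)).
Proof. ssolve. Qed.
Lemma bAAn6 : precX (dotX (gv (GenA1 a)) (gv (GenA1 c))) (gv k) =
  dotX (gv (GenA1 a)) (precX (gv (GenA1 c)) (gv k)).
Proof. ssolve. Qed.
Lemma bAAn7 : dotX (dotX (gv (GenA1 a)) (gv (GenA1 c))) (gv k) =
  dotX (gv (GenA1 a)) (dotX (gv (GenA1 c)) (gv k)).
Proof. ssolve. Qed.
End AAn.


Section nAA.
Variables (g : tgen A B) (c e : A).
Hypothesis Hg : (gen_right g).1 = 0.
Ltac side' := by rewrite /= ?Hg ?addr0 ?mul0r ?mulr0 ?mul1r ?gen_cond.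
Ltac ssolve := rewrite ?starX_AA ?(specAp, specAd, specAs) !gen_emb ?starXE;
  rewrite ?(Up, Ud, Us); try side'; rewrite -?embDr ?(Up, Ud, Us); try side';
  case: g Hg => [a b|b|a] /=; [move=> _ | move=> _ | by move/eqP; rewrite oner_eq0];
  apply: tbar_eq => /=; fin.
Lemma bnAA1 : precX (precX (gv g) (gv (GenA1 c))) (gv (GenA1 e)) =
  precX (gv g) (starX (gv (GenA1 c)) (gv (GenA1 e))).
Proof. ssolve. Qed.
Lemma bnAA2 : precX (succX (gv g) (gv (GenA1 c))) (gv (GenA1 e)) =
  succX (gv g) (precX (gv (GenA1 c)) (gv (GenA1 e))).
Proof. ssolve. Qed.
Lemma bnAA3 : succX (starX (gv g) (gv (GenA1 c))) (gv (GenA1 e)) =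
  succX (gv g) (succX (gv (GenA1 c)) (gv (GenA1 e))).
Proof. ssolve. Qed.
Lemma bnAA4 : dotX (succX (gv g) (gv (GenA1 c))) (gv (GenA1 e)) =
  succX (gv g) (dotX (gv (GenA1 c)) (gv (GenA1 e))).
Proof. ssolve. Qed.
Lemma bnAA5 : dotX (precX (gv g) (gv (GenA1 c))) (gv (GenA1 e)) =
  dotX (gv g) (succX (gv (GenA1 c)) (gv (GenA1 e))).
Proof. ssolve. Qed.
Lemma bnAA6 : precX (dotX (gv g) (gv (GenA1 c))) (gv (GenA1 e)) =
  dotX (gv g) (precX (gv (GenA1 c)) (gv (GenA1 e))).
Proof. ssolve. Qed.
Lemma bnAA7 : dotX (dotX (gv g) (gv (GenA1 c))) (gv (GenA1 e)) =
  dotX (gv g) (dotX (gv (GenA1 c)) (gv (GenA1 e))).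
Proof. ssolve. Qed.
End nAA.

Ltac side3 := by rewrite /= ?mul0r ?mulr0.
Lemma allid1 g h k : precX (precX (gv g) (gv h)) (gv k) =
  precX (gv g) (starX (gv h) (gv k)).
Proof.
case: g => [a b|b|a]; case: h => [c d|d|c]; case: k => [e f|f|e];
  first [ by apply: gid1; side3 | exact: aid1 | by apply: bAAn1; side3 | by apply: bnAA1; side3 ].
Qed.
Lemma allid2 g h k : precX (succX (gv g) (gv h)) (gv k) =
  succX (gv g) (precX (gv h) (gv k)).
Proof.
case: g => [a b|b|a]; case: h => [c d|d|c]; case: k => [e f|f|e];
  first [ by apply: gid2; side3 | exact: aid2 | by apply: bAAn2; side3 | by apply: bnAA2; side3 ].
Qed.
Lemma allid3 g h k : succX (starX (gv g) (gv h)) (gv k) =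
  succX (gv g) (succX (gv h) (gv k)).
Proof.
case: g => [a b|b|a]; case: h => [c d|d|c]; case: k => [e f|f|e];
  first [ by apply: gid3; side3 | exact: aid3 | by apply: bAAn3; side3 | by apply: bnAA3; side3 ].
Qed.
Lemma allid4 g h k : dotX (succX (gv g) (gv h)) (gv k) =
  succX (gv g) (dotX (gv h) (gv k)).
Proof.
case: g => [a b|b|a]; case: h => [c d|d|c]; case: k => [e f|f|e];
  first [ by apply: gid4; side3 | exact: aid4 | by apply: bAAn4; side3 | by apply: bnAA4; side3 ].
Qed.
Lemma allid5 g h k : dotX (precX (gv g) (gv h)) (gv k) =
  dotX (gv g) (succX (gv h) (gv k)).
Proof.
case: g => [a b|b|a]; case: h => [c d|d|c]; case: k => [e f|f|e];
  first [ by apply: gid5; side3 | exact: aid5 | by apply: bAAn5; side3 | by apply: bnAA5; side3 ].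
Qed.
Lemma allid6 g h k : precX (dotX (gv g) (gv h)) (gv k) =
  dotX (gv g) (precX (gv h) (gv k)).
Proof.
case: g => [a b|b|a]; case: h => [c d|d|c]; case: k => [e f|f|e];
  first [ by apply: gid6; side3 | exact: aid6 | by apply: bAAn6; side3 | by apply: bnAA6; side3 ].
Qed.
Lemma allid7 g h k : dotX (dotX (gv g) (gv h)) (gv k) =
  dotX (gv g) (dotX (gv h) (gv k)).
Proof.
case: g => [a b|b|a]; case: h => [c d|d|c]; case: k => [e f|f|e];
  first [ by apply: gid7; side3 | exact: aid7 | by apply: bAAn7; side3 | by apply: bnAA7; side3 ].
Qed.
End Main.

Section Ext.
Variables (K : fieldType) (A B T : lmodType K) (tens : A -> B -> T).
Hypothesis Ht : is_tensor_product tens.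
Local Notation tb := (tbar A B T).
Local Notation gv := (gen_val tens).

Lemma ext1 (W : lmodType K) (phi psi : tb -> W) : lin phi -> lin psi ->
  (forall g, phi (gv g) = psi (gv g)) -> forall x, phi x = psi x.
Proof.
move=> Hphi Hpsi E [[t b] a].
have -> : ((t, b, a) : tb) = (t, 0, 0) + gv (Gen1B b) + gv (GenA1 a).
  by apply: tbar_eq => /=; rewrite ?addr0 ?add0r.
rewrite !(linD Hphi) !(linD Hpsi) !E; congr (_ + _ + _).
have Hc : forall (k : K) (x y : T), ((k *: x + y, 0, 0) : tb) = k *: (x, 0, 0) + (y, 0, 0).
  by move=> k x y; apply: tbar_eq => /=; rewrite ?scaler0 ?addr0.
apply: (T_uniq Ht (g1 := fun t => phi (t, 0, 0)) (g2 := fun t => psi (t, 0, 0))).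
- by move=> k x y; rewrite Hc Hphi.
- by move=> k x y; rewrite Hc Hpsi.
- by move=> a' b'; exact: (E (GenAB a' b')).
Qed.

Lemma ext3 (o1 o2 o3 o4 : tb -> tb -> tb) :
  bilinear_map o1 -> bilinear_map o2 -> bilinear_map o3 -> bilinear_map o4 ->
  (forall g h k, o1 (o2 (gv g) (gv h)) (gv k) = o3 (gv g) (o4 (gv h) (gv k))) ->
  forall x y z, o1 (o2 x y) z = o3 x (o4 y z).
Proof.
move=> H1 H2 H3 H4 E.
have S1 : forall x h k, o1 (o2 x (gv h)) (gv k) = o3 x (o4 (gv h) (gv k)).
  move=> x h k; apply: (ext1 (phi := fun x => o1 (o2 x (gv h)) (gv k))
                             (psi := fun x => o3 x (o4 (gv h) (gv k)))) => //.
  - exact: (lin_comp (bil_linl H1 _) (bil_linl H2 _)).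
  - exact: (bil_linl H3 _).
have S2 : forall x y k, o1 (o2 x y) (gv k) = o3 x (o4 y (gv k)).
  move=> x y k; apply: (ext1 (phi := fun y => o1 (o2 x y) (gv k))
                             (psi := fun y => o3 x (o4 y (gv k)))) => //.
  - exact: (lin_comp (bil_linl H1 _) (bil_linr H2 _)).
  - exact: (lin_comp (bil_linr H3 _) (bil_linl H4 _)).
move=> x y z; apply: (ext1 (phi := fun z => o1 (o2 x y) z)
                           (psi := fun z => o3 x (o4 y z))) => //.
- exact: (bil_linr H1 _).
- exact: (lin_comp (bil_linr H3 _) (bil_linr H4 _)).
Qed.
End Ext.

Lemma part2 (K : fieldType) (A B T : lmodType K)
  (precA dotA succA : A -> A -> A) (precB dotB succB : B -> B -> B)
  (tens : A -> B -> T) :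
  tridendriform precA dotA succA ->
  tridendriform precB dotB succB ->
  is_tensor_product tens ->
  let starA := aug_star precA dotA succA in
  (forall precX dotX succX : tbar A B T -> tbar A B T -> tbar A B T,
     [/\ bilinear_map precX, bilinear_map dotX & bilinear_map succX] ->
     [/\ tbar_op_spec tens precA starA (aug_prec precB) precX,
         tbar_op_spec tens dotA starA (aug_dot dotB) dotX &
         tbar_op_spec tens succA starA (aug_succ succB) succX] ->
     tridendriform precX dotX succX).
Proof.
move=> HA HB Ht starA precX dotX succX [HpX HdX HsX] [SpX SdX SsX].
have HstX := starT_bil HpX HdX HsX.
have E1 : forall x y z, precX (precX x y) z = precX x (tri_star precX dotX succX y z).
  by apply: (ext3 Ht) => //; exact: (allid1 Ht HA HB HpX HdX HsX SpX SdX SsX).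
have E2 : forall x y z, precX (succX x y) z = succX x (precX y z).
  by apply: (ext3 Ht) => //; exact: (allid2 Ht HA HB HpX HsX SpX SsX).
have E3 : forall x y z, succX (tri_star precX dotX succX x y) z = succX x (succX y z).
  by apply: (ext3 Ht) => //; exact: (allid3 Ht HA HB HpX HdX HsX SpX SdX SsX).
have E4 : forall x y z, dotX (succX x y) z = succX x (dotX y z).
  by apply: (ext3 Ht) => //; exact: (allid4 Ht HA HB HdX HsX SdX SsX).
have E5 : forall x y z, dotX (precX x y) z = dotX x (succX y z).
  by apply: (ext3 Ht) => //; exact: (allid5 Ht HA HB HpX HdX HsX SpX SdX SsX).
have E6 : forall x y z, precX (dotX x y) z = dotX x (precX y z).
  by apply: (ext3 Ht) => //; exact: (allid6 Ht HA HB HpX HdX SpX SdX).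
have E7 : forall x y z, dotX (dotX x y) z = dotX x (dotX y z).
  by apply: (ext3 Ht) => //; exact: (allid7 Ht HA HB HdX SdX).
split; first by [].
cbv zeta; move=> a b c.
by do !split.
Qed.

Arguments liftT : simpl never.
Arguments liftTT : simpl never.

Section Exist.
Variables (K : fieldType) (A B T : lmodType K) (tens : A -> B -> T).
Hypothesis Ht : is_tensor_product tens.
Variables (precA dotA succA : A -> A -> A).
Hypotheses (HpA : bilinear_map precA) (HdA : bilinear_map dotA) (HsA : bilinear_map succA).
Variables (opA : A -> A -> A) (opB : B -> B -> B) (r l : B -> B) (augop : aug B -> aug B -> aug B).
Hypotheses (HoA : bilinear_map opA) (HoB : bilinear_map opB) (Hr : lin r) (Hl : lin l).
Hypothesis Haug : forall y y', augop y y' = (0, opB y.2 y'.2 + y'.1 *: r y.2 + y.1 *: l y'.2).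
Local Notation tb := (tbar A B T).
Local Notation st := (tri_star precA dotA succA).
Local Notation starA := (aug_star precA dotA succA).
Let Hst := starT_bil HpA HdA HsA.
Let Htb := tens_bil Ht.

Lemma bil_tensFG (F : A -> A) (G : B -> B) : lin F -> lin G ->
  bilinear_map (fun a b => tens (F a) (G b)).
Proof.
move=> HF HG; split=> u k x y.
- by rewrite HG (bil_linr Htb).
- by rewrite HF (bil_linl Htb).
Qed.

Let B1 d : bilinear_map (fun a b => tens a (opB b d)).
Proof. exact: (bil_tensFG (F := id) (@lin_id _ A) (bil_linl HoB d)). Qed.
Let B2 c : bilinear_map (fun a b => tens (st a c) (r b)).
Proof. exact: (bil_tensFG (bil_linl Hst c) Hr). Qed.
Let B3 b : bilinear_map (fun c d => tens c (opB b d)).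
Proof. exact: (bil_tensFG (F := id) (@lin_id _ A) (bil_linr HoB b)). Qed.
Let B4 a : bilinear_map (fun c d => tens (st a c) (l d)).
Proof. exact: (bil_tensFG (bil_linr Hst a) Hl). Qed.

Definition Psi a b c d := tens (st a c) (opB b d).
Let P1 c d : bilinear_map (fun a b => Psi a b c d).
Proof. exact: (bil_tensFG (bil_linl Hst c) (bil_linl HoB d)). Qed.
Let P2 a b : bilinear_map (Psi a b).
Proof. exact: (bil_tensFG (bil_linr Hst a) (bil_linr HoB b)). Qed.

Definition tpart (x x' : tb) : T :=
  liftTT tens Psi x.1.1 x'.1.1
  + liftT tens (fun a b => tens a (opB b x'.1.2)) x.1.1
  + liftT tens (fun a b => tens (st a x'.2) (r b)) x.1.1
  + liftT tens (fun c d => tens c (opB x.1.2 d)) x'.1.1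
  + tens x'.2 (r x.1.2)
  + liftT tens (fun c d => tens (st x.2 c) (l d)) x'.1.1
  + tens x.2 (l x'.1.2).

Definition opXc (x x' : tb) : tb := (tpart x x', opB x.1.2 x'.1.2, opA x.2 x'.2).

Lemma lin_add (V W : lmodType K) (f g : V -> W) : lin f -> lin g -> lin (fun x => f x + g x).
Proof. by move=> Hf Hg k x y; rewrite Hf Hg scalerDr; ac. Qed.
Lemma lin_p11 (W : lmodType K) (f : T -> W) : lin f -> lin (fun x : tb => f x.1.1).
Proof. by move=> Hf k x y; rewrite tbD11 tbZ11 Hf. Qed.
Lemma lin_p12 (W : lmodType K) (f : B -> W) : lin f -> lin (fun x : tb => f x.1.2).
Proof. by move=> Hf k x y; rewrite tbD12 tbZ12 Hf. Qed.
Lemma lin_p2 (W : lmodType K) (f : A -> W) : lin f -> lin (fun x : tb => f x.2).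
Proof. by move=> Hf k x y; rewrite tbD2 tbZ2 Hf. Qed.

Lemma tpart_linr x : lin (tpart x).
Proof.
rewrite /tpart; repeat apply: lin_add.
- exact: (lin_p11 (liftTT_linr Ht P1 P2 _)).
- apply: (lin_p12 (f := fun p => liftT tens (fun a b => tens a (opB b p)) x.1.1)).
  apply: (liftT_param Ht) => // a b; exact: (lin_comp (bil_linr Htb a) (bil_linr HoB b)).
- apply: (lin_p2 (f := fun p => liftT tens (fun a b => tens (st a p) (r b)) x.1.1)).
  apply: (liftT_param Ht) => // a b; exact: (lin_comp (bil_linl Htb (r b)) (bil_linr Hst a)).
- exact: (lin_p11 (liftT_lin Ht (B3 _))).
- exact: (lin_p2 (bil_linl Htb _)).
- exact: (lin_p11 (liftT_lin Ht (B4 _))).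
- exact: (lin_p12 (lin_comp (bil_linr Htb _) Hl)).
Qed.

Lemma tpart_linl x' : lin (fun x => tpart x x').
Proof.
rewrite /tpart; repeat apply: lin_add.
- exact: (lin_p11 (f := fun t => liftTT tens Psi t x'.1.1) (liftTT_linl Ht P1 P2 _)).
- exact: (lin_p11 (liftT_lin Ht (B1 _))).
- exact: (lin_p11 (liftT_lin Ht (B2 _))).
- apply: (lin_p12 (f := fun p => liftT tens (fun c d => tens c (opB p d)) x'.1.1)).
  apply: (liftT_param Ht) => // c d; exact: (lin_comp (bil_linr Htb c) (bil_linl HoB d)).
- exact: (lin_p12 (lin_comp (bil_linr Htb _) Hr)).
- apply: (lin_p2 (f := fun p => liftT tens (fun c d => tens (st p c) (l d)) x'.1.1)).
  apply: (liftT_param Ht) => // c d; exact: (lin_comp (bil_linl Htb (l d)) (bil_linl Hst c)).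
- exact: (lin_p2 (bil_linl Htb _)).
Qed.

Lemma opXc_bil : bilinear_map opXc.
Proof.
split=> u k x y; apply: tbar_eq; rewrite /opXc !tbE /=.
- exact: tpart_linr.
- exact: (bil_linr HoB).
- exact: (bil_linr HoA).
- exact: (tpart_linl u).
- exact: (bil_linl HoB).
- exact: (bil_linl HoA).
Qed.

Let L1 d a b : liftT tens (fun a b => tens a (opB b d)) (tens a b) = tens a (opB b d).
Proof. exact: (liftT_tens Ht _ _ (B1 d)). Qed.
Let L2 c a b : liftT tens (fun a b => tens (st a c) (r b)) (tens a b) = tens (st a c) (r b).
Proof. exact: (liftT_tens Ht _ _ (B2 c)). Qed.
Let L3 b c d : liftT tens (fun c d => tens c (opB b d)) (tens c d) = tens c (opB b d).
Proof. exact: (liftT_tens Ht _ _ (B3 b)). Qed.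
Let L4 a c d : liftT tens (fun c d => tens (st a c) (l d)) (tens c d) = tens (st a c) (l d).
Proof. exact: (liftT_tens Ht _ _ (B4 a)). Qed.
Let Z1 d : liftT tens (fun a b => tens a (opB b d)) 0 = 0.
Proof. exact: (liftT0 Ht (B1 d)). Qed.
Let Z2 c : liftT tens (fun a b => tens (st a c) (r b)) 0 = 0.
Proof. exact: (liftT0 Ht (B2 c)). Qed.
Let Z3 b : liftT tens (fun c d => tens c (opB b d)) 0 = 0.
Proof. exact: (liftT0 Ht (B3 b)). Qed.
Let Z4 a : liftT tens (fun c d => tens (st a c) (l d)) 0 = 0.
Proof. exact: (liftT0 Ht (B4 a)). Qed.
Let M1 a b c d : liftTT tens Psi (tens a b) (tens c d) = tens (st a c) (opB b d).
Proof. exact: (liftTT_tens Ht P1 P2). Qed.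
Let M0r t : liftTT tens Psi t 0 = 0.
Proof. exact: (lin0 (liftTT_linr Ht P1 P2 t)). Qed.
Let M0l t : liftTT tens Psi 0 t = 0.
Proof. exact: (lin0 (liftTT_linl Ht P1 P2 t)). Qed.

Lemma opXc_spec : tbar_op_spec tens opA starA augop opXc.
Proof.
move=> g h; case: g => [a b|b|a]; case: h => [c d|d|c];
  rewrite /opXc /tpart /= ?Haug /emb /=;
  rewrite ?(L1, L2, L3, L4, Z1, Z2, Z3, Z4, M1, M0r, M0l);
  apply: tbar_eq => /=;
  rewrite ?(mul0r, mulr0, mul1r, mulr1, scale0r, scale1r, scaler0, add0r, addr0,
   tens0l Ht, tens0r Ht, lin0 Hr, lin0 Hl,
   lin0 (bil_linl HoB _), lin0 (bil_linr HoB _),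
   lin0 (bil_linl HoA _), lin0 (bil_linr HoA _),
   lin0 (bil_linl Hst _), lin0 (bil_linr Hst _),
   L1, L2, L3, L4, Z1, Z2, Z3, Z4, M1, M0r, M0l) //.
Qed.
End Exist.

Unset Implicit Arguments. Set Strict Implicit.

Theorem mainTheorem3 (K : fieldType) (A B T : lmodType K)
  (precA dotA succA : A -> A -> A) (precB dotB succB : B -> B -> B)
  (tens : A -> B -> T) :
  tridendriform precA dotA succA ->
  tridendriform precB dotB succB ->
  is_tensor_product tens ->
  let starA := aug_star precA dotA succA in
  (exists precX dotX succX : tbar A B T -> tbar A B T -> tbar A B T,
     [/\ bilinear_map precX, bilinear_map dotX & bilinear_map succX] /\
     [/\ tbar_op_spec tens precA starA (aug_prec precB) precX,
         tbar_op_spec tens dotA starA (aug_dot dotB) dotX &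
         tbar_op_spec tens succA starA (aug_succ succB) succX]) /\
  (forall precX dotX succX : tbar A B T -> tbar A B T -> tbar A B T,
     [/\ bilinear_map precX, bilinear_map dotX & bilinear_map succX] ->
     [/\ tbar_op_spec tens precA starA (aug_prec precB) precX,
         tbar_op_spec tens dotA starA (aug_dot dotB) dotX &
         tbar_op_spec tens succA starA (aug_succ succB) succX] ->
     tridendriform precX dotX succX).
Proof.
move=> HA HB Ht starA; split; last exact: (part2 HA HB Ht).
have HpA := tri_bp HA; have HdA := tri_bd HA; have HsA := tri_bs HA.
have HpB := tri_bp HB; have HdB := tri_bd HB; have HsB := tri_bs HB.
exists (opXc tens precA dotA succA precA precB id (fun _ => 0)).
exists (opXc tens precA dotA succA dotA dotB (fun _ => 0) (fun _ => 0)).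
exists (opXc tens precA dotA succA succA succB (fun _ => 0) id).
split; split.
- exact: (opXc_bil Ht HpA HdA HsA HpA HpB (@lin_id _ B) (@lin_zero _ B B)).
- exact: (opXc_bil Ht HpA HdA HsA HdA HdB (@lin_zero _ B B) (@lin_zero _ B B)).
- exact: (opXc_bil Ht HpA HdA HsA HsA HsB (@lin_zero _ B B) (@lin_id _ B)).
- apply: (opXc_spec Ht HpA HdA HsA HpA HpB (@lin_id _ B) (@lin_zero _ B B)).
  by move=> y y'; rewrite /aug_prec scaler0 addr0.
- apply: (opXc_spec Ht HpA HdA HsA HdA HdB (@lin_zero _ B B) (@lin_zero _ B B)).
  by move=> y y'; rewrite /aug_dot !scaler0 !addr0.
- apply: (opXc_spec Ht HpA HdA HsA HsA HsB (@lin_zero _ B B) (@lin_id _ B)).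
  by move=> y y'; rewrite /aug_succ scaler0 addr0.
Qed.
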